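(* Let $A,B$ be nonempty persistence diagrams, $\Theta(c)=d_\infty(cA,B)$ for $c\ge0$, let $b^{(m)}\in\chi(B)$ and $a^{(m)}\in\chi(A)$ be points with largest $y$-coordinate within $\chi(B)$ and $\chi(A)$ respectively, and set $$c_B=\min\Big\{\frac{b^{(m)}_y+b^{(m)}_x}{2\,\mathrm{bd}(A)},\frac{\mathrm{pers}(B)}{\mathrm{pers}(A)}\Big\},\qquad c_A=\max\Big\{\frac{2\,\mathrm{bd}(B)}{a^{(m)}_x+a^{(m)}_y},\frac{\mathrm{pers}(B)}{\mathrm{pers}(A)}\Big\}.$$ Then $c_B\le c_A$; $\Theta(c)=\mathrm{pers}(B)$ for all $0\le c\le c_B$; $\Theta(c)=c\cdot\mathrm{pers}(A)$ for all $c\ge c_A$; and the minimum value $\overline{d_D}(A,B)$ of $\Theta$ on $[0,\infty)$ is attained at some $c\in[c_B,c_A]$.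
   Context: A persistence diagram is a finite multiset of points $a=(a_x,a_y)$ with $0\le a_x<a_y<\infty$ together with the diagonal $\Delta$ of infinite multiplicity; nonempty means it has at least one such point. $d_\infty$ is the bottleneck distance. $cA=\{(ca_x,ca_y)\}$ for $c>0$, $0A$ is the empty diagram. $\overline{d_D}(A,B)=\inf_{c\ge0}d_\infty(cA,B)$. $\mathrm{pers}(a)=(a_y-a_x)/2$; $\mathrm{pers}(A)=\max_{a\in A}\mathrm{pers}(a)$; $\chi(A)$ is the multiset of points of $A$ with persistence equal to $\mathrm{pers}(A)$; $\mathrm{bd}(A)=\max_{a\in A}a_y$. *)

(* Defs.v *)
From HB Require Import structures.
From mathcomp Require Import all_boot all_order all_algebra.
From mathcomp Require Import boolp classical_sets reals.
Unset Strict Implicit. Unset Printing Implicit Defensive.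
Import Order.TTheory GRing.Theory Num.Theory.
Local Open Scope ring_scope.

Section PD.
Context {R : realType}.

(* A persistence diagram: finite multiset (seq) of off-diagonal points
   (a_x, a_y) with 0 <= a_x < a_y; the diagonal is implicit. *)
Definition is_diagram (A : seq (R * R)) : Prop :=
  forall a, a \in A -> 0 <= a.1 /\ a.1 < a.2.

Definition pers_pt (a : R * R) : R := (a.2 - a.1) / 2.
Definition persD (A : seq (R * R)) : R := \big[Num.max/0]_(a <- A) pers_pt a.
Definition bd (A : seq (R * R)) : R := \big[Num.max/0]_(a <- A) a.2.

Definition linf (a b : R * R) : R := Num.max `|a.1 - b.1| `|a.2 - b.2|.

Definition scaleD (c : R) (A : seq (R * R)) : seq (R * R) :=
  if c == 0 then [::] else [seq (c * a.1, c * a.2) | a <- A].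

(* partial matchings between the points of A and B (unmatched points are
   matched to the diagonal) *)
Definition is_matching {n m : nat} (f : {ffun 'I_n -> option 'I_m}) : bool :=
  [forall i, forall j, ((f i != None) && (f i == f j)) ==> (i == j)].

Definition match_cost (A B : seq (R * R))
    (f : {ffun 'I_(size A) -> option 'I_(size B)}) : R :=
  Num.max
    (\big[Num.max/0]_(i < size A)
        match f i with
        | Some j => linf (nth (0, 0) A i) (nth (0, 0) B j)
        | None => pers_pt (nth (0, 0) A i)
        end)
    (\big[Num.max/0]_(j < size B | Some j \notin codom f)
        pers_pt (nth (0, 0) B j)).

(* bottleneck distance: minimum cost over all partial matchings
   (the empty matching is one of them, used as the initial value) *)
Definition bottleneck (A B : seq (R * R)) : R :=
  \big[Num.min/match_cost A B [ffun=> None]]_(f : {ffun 'I_(size A) -> option 'I_(size B)} | is_matching f)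
     match_cost A B f.

Definition Theta (A B : seq (R * R)) (c : R) : R := bottleneck (scaleD c A) B.

Definition dbarD (A B : seq (R * R)) : R :=
  inf [set Theta A B c | c in [set c : R | 0 <= c]].

End PD.

(* Main.v *)
Require Import Defs.
From HB Require Import structures.
From mathcomp Require Import all_boot all_order all_algebra.
From mathcomp Require Import boolp classical_sets reals.
From mathcomp Require Import topology normedtype derive.
From mathcomp Require Import ring lra.
Import Order.TTheory GRing.Theory Num.Theory numFieldNormedType.Exports.
Local Open Scope ring_scope.

Section Helpers.
Variable R : realType.

Lemma bigmax_ge (I : eqType) (r : seq I) (P : pred I) (F : I -> R) x i0 :
  i0 \in r -> P i0 -> F i0 <= \big[Num.max/x]_(i <- r | P i) F i.
Proof.
elim: r => // a r IH; rewrite in_cons big_cons => /orP[/eqP-> Pi|ir Pi].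
  by rewrite Pi le_max lexx.
case: ifP => _; last exact: IH.
by rewrite le_max IH ?orbT.
Qed.

Lemma bigmax_le (I : Type) (r : seq I) (P : pred I) (F : I -> R) x v :
  x <= v -> (forall i, P i -> F i <= v) -> \big[Num.max/x]_(i <- r | P i) F i <= v.
Proof.
move=> xv Fv; apply: (big_ind (fun y => y <= v)) => //.
by move=> a b ha hb; rewrite ge_max ha hb.
Qed.

Lemma bigmin_le (I : Type) (r : seq I) (P : pred I) (F : I -> R) x v :
  x <= v -> \big[Num.min/x]_(i <- r | P i) F i <= v.
Proof.
move=> xv; elim: r => [|a r IH]; first by rewrite big_nil.
by rewrite big_cons; case: ifP => // _; rewrite ge_min IH orbT.
Qed.

Lemma bigmin_ge (I : Type) (r : seq I) (P : pred I) (F : I -> R) x v :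
  v <= x -> (forall i, P i -> v <= F i) -> v <= \big[Num.min/x]_(i <- r | P i) F i.
Proof.
move=> xv Fv; apply: (big_ind (fun y => v <= y)) => //.
by move=> a b ha hb; rewrite le_min ha hb.
Qed.

Lemma max_lip (x y x' y' e : R) : `|x - x'| <= e -> `|y - y'| <= e ->
  `|Num.max x y - Num.max x' y'| <= e.
Proof.
rewrite !ler_norml => /andP[? ?] /andP[? ?].
case: (leP x y); case: (leP x' y') => *; apply/andP; split; lra.
Qed.

Lemma min_lip (x y x' y' e : R) : `|x - x'| <= e -> `|y - y'| <= e ->
  `|Num.min x y - Num.min x' y'| <= e.
Proof.
rewrite !ler_norml => /andP[? ?] /andP[? ?].
case: (leP x y); case: (leP x' y') => *; apply/andP; split; lra.
Qed.

Lemma bigmax_lip (I : Type) (r : seq I) (P : pred I) (F G : I -> R) x y e :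
  `|x - y| <= e -> (forall i, P i -> `|F i - G i| <= e) ->
  `|\big[Num.max/x]_(i <- r | P i) F i - \big[Num.max/y]_(i <- r | P i) G i| <= e.
Proof.
move=> h1 h2; apply: (big_ind2 (fun a b => `|a - b| <= e)) => //.
by move=> *; apply: max_lip.
Qed.

Lemma bigmin_lip (I : Type) (r : seq I) (P : pred I) (F G : I -> R) x y e :
  `|x - y| <= e -> (forall i, P i -> `|F i - G i| <= e) ->
  `|\big[Num.min/x]_(i <- r | P i) F i - \big[Num.min/y]_(i <- r | P i) G i| <= e.
Proof.
move=> h1 h2; apply: (big_ind2 (fun a b => `|a - b| <= e)) => //.
by move=> *; apply: min_lip.
Qed.

Lemma dist_lip (c c' u w M : R) : 0 <= u -> u <= M ->
  `| `|c * u - w| - `|c' * u - w| | <= `|c - c'| * M.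
Proof.
move=> u0 uM; apply: le_trans (ler_dist_dist _ _) _.
have -> : c * u - w - (c' * u - w) = (c - c') * u by ring.
by rewrite normrM (ger0_norm u0) ler_wpM2l.
Qed.

Definition cost_n (n m : nat) (X Y : seq (R * R)) (f : {ffun 'I_n -> option 'I_m}) : R :=
  Num.max
    (\big[Num.max/0]_(i < n)
        match f i with
        | Some j => linf (nth (0, 0) X i) (nth (0, 0) Y j)
        | None => pers_pt (nth (0, 0) X i)
        end)
    (\big[Num.max/0]_(j < m | Some j \notin codom f)
        pers_pt (nth (0, 0) Y j)).

Definition bott_n (n m : nat) (X Y : seq (R * R)) : R :=
  \big[Num.min/@cost_n n m X Y [ffun=> None]]_(f : {ffun 'I_n -> option 'I_m} | is_matching f)
     @cost_n n m X Y f.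

Lemma bottE (X Y : seq (R * R)) : bottleneck X Y = bott_n (size X) (size Y) X Y.
Proof. by []. Qed.

Section Main.
Variables (A B : seq (R * R)).
Hypotheses (hA : is_diagram A) (hB : is_diagram B).

Definition scF (c : R) (a : R * R) : R * R := (c * a.1, c * a.2).

Definition Thp (c : R) : R :=
  bott_n (size A) (size B) (map (scF c) A) B.

Lemma ThetaE c : c != 0 -> Theta A B c = Thp c.
Proof. by move=> c0; rewrite /Theta /scaleD (negbTE c0) bottE size_map. Qed.

Lemma le_bd (X : seq (R * R)) a : a \in X -> a.2 <= bd X.
Proof. move=> aX; rewrite /bd. exact: (@bigmax_ge _ X xpredT (fun a : R*R => a.2) 0 a aX erefl). Qed.

Lemma le_pers (X : seq (R * R)) a : a \in X -> pers_pt a <= persD X.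
Proof. move=> aX; exact: (@bigmax_ge _ X xpredT pers_pt 0 a aX erefl). Qed.

Arguments le_bd {X a}.
Arguments le_pers {X a}.

Lemma nthA (i : 'I_(size A)) : nth (0, 0) A i \in A.
Proof. exact: mem_nth. Qed.

Lemma nthB (j : 'I_(size B)) : nth (0, 0) B j \in B.
Proof. exact: mem_nth. Qed.

Lemma nth_sc c (i : 'I_(size A)) :
  nth (0, 0) (map (scF c) A) i = scF c (nth (0, 0) A i).
Proof. exact: nth_map. Qed.


Lemma bigmax_base (I : Type) (r : seq I) (P : pred I) (F : I -> R) x :
  x <= \big[Num.max/x]_(i <- r | P i) F i.
Proof.
elim: r => [|a r IH]; first by rewrite big_nil.
by rewrite big_cons; case: ifP => // _; rewrite le_max IH orbT.
Qed.

Lemma bdA0 : 0 <= bd A.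
Proof. exact: bigmax_base. Qed.

Lemma cost_lip c c' (f : {ffun 'I_(size A) -> option 'I_(size B)}) :
  `|@cost_n (size A) (size B) (map (scF c) A) B f
    - @cost_n (size A) (size B) (map (scF c') A) B f| <= `|c - c'| * bd A.
Proof.
have e0 : 0 <= `|c - c'| * bd A by rewrite mulr_ge0 ?bdA0.
apply: max_lip; last by rewrite subrr normr0.
apply: bigmax_lip; first by rewrite subrr normr0.
move=> i _; rewrite !nth_sc.
have [a10 a12] := hA _ (nthA i); have a2b := le_bd (nthA i).
set a := nth _ A i in a10 a12 a2b *.
case: (f i) => [j|].
- rewrite /linf /scF /=; apply: max_lip; apply: dist_lip => //; lra.
- rewrite /pers_pt /scF /=.
  have -> : (c * a.2 - c * a.1) / 2 - (c' * a.2 - c' * a.1) / 2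
            = (c - c') * ((a.2 - a.1) / 2) by ring.
  rewrite normrM (@ger0_norm _ ((a.2 - a.1) / 2)); last lra.
  apply: ler_wpM2l => //; lra.
Qed.

Lemma Thp_lip c c' : `|Thp c - Thp c'| <= `|c - c'| * bd A.
Proof.
rewrite /Thp /bott_n; apply: bigmin_lip => [|f _]; exact: cost_lip.
Qed.

Lemma Thp_cont : continuous Thp.
Proof.
move=> x; apply/cvgrPdist_lt => e e0.
have b0 := bdA0.
have d0 : 0 < e / (bd A + 1) by rewrite divr_gt0 //; lra.
apply/nbhs_ballP; exists (e / (bd A + 1)) => // t; rewrite /ball /= => ht.
apply: le_lt_trans (Thp_lip x t) _.
move: ht; rewrite ltr_pdivlMr; last lra.
have := normr_ge0 (x - t); nra.
Qed.

Lemma lb_B n (X : seq (R * R)) (f : {ffun 'I_n -> option 'I_(size B)}) bm :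
  bm \in B -> (forall i : 'I_n, pers_pt bm <= linf (nth (0, 0) X i) bm) ->
  pers_pt bm <= @cost_n n (size B) X B f.
Proof.
move=> bmB H.
have jlt : (index bm B < size B)%N by rewrite index_mem.
pose jb := Ordinal jlt.
have ejb : nth (0,0) B jb = bm by rewrite /= nth_index.
rewrite /cost_n le_max; apply/orP.
case: (boolP (Some jb \in codom f)) => [/codomP [i fi]|nc].
- left; apply: le_trans _ (bigmax_ge _ _ _ _ _ _ (mem_index_enum i) erefl) => /=.
  by rewrite -fi ejb; exact: H.
- right; apply: le_trans _ (bigmax_ge _ _ _ _ _ _ (mem_index_enum jb) nc) => /=.
  by rewrite ejb.
Qed.

Lemma lb_A c (f : {ffun 'I_(size A) -> option 'I_(size B)}) am :
  am \in A -> (forall b, b \in B -> c * pers_pt am <= linf (scF c am) b) ->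
  c * pers_pt am <= @cost_n (size A) (size B) (map (scF c) A) B f.
Proof.
move=> amA H.
have ilt : (index am A < size A)%N by rewrite index_mem.
pose ia := Ordinal ilt.
have eia : nth (0,0) A ia = am by rewrite /= nth_index.
rewrite /cost_n le_max; apply/orP; left.
apply: le_trans _ (bigmax_ge _ _ _ _ _ _ (mem_index_enum ia) erefl) => /=.
rewrite (nth_map (0,0) _ _ ilt) nth_index //; case: (f ia) => [j|].
- exact: H (nthB j).
- rewrite /pers_pt /scF /=; nra.
Qed.

Lemma main_sec (neA : A != [::]) (neB : B != [::])
  (am bm : R * R)
  (amA : am \in A) (am_chi : pers_pt am = persD A)
  (am_max : forall a, a \in A -> pers_pt a = persD A -> a.2 <= am.2)
  (bmB : bm \in B) (bm_chi : pers_pt bm = persD B)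
  (bm_max : forall b, b \in B -> pers_pt b = persD B -> b.2 <= bm.2) :
  let cB := Num.min ((bm.2 + bm.1) / (2 * bd A)) (persD B / persD A) in
  let cA := Num.max ((2 * bd B) / (am.1 + am.2)) (persD B / persD A) in
  [/\ cB <= cA,
      (forall c, 0 <= c -> c <= cB -> Theta A B c = persD B),
      (forall c, cA <= c -> Theta A B c = c * persD A) &
      exists2 c, cB <= c <= cA & Theta A B c = dbarD A B].
Proof.
move=> cB cA.
have [am1 am12] := hA _ amA; have [bm1 bm12] := hB _ bmB.
have pA0 : 0 < persD A by rewrite -am_chi /pers_pt; lra.
have pB0 : 0 < persD B by rewrite -bm_chi /pers_pt; lra.
have bdA_ge := le_bd amA; have bdB_ge := le_bd bmB.
have bdApos : 0 < bd A by lra.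
have cBle : cB <= persD B / persD A by rewrite /cB ge_min lexx orbT.
have cAge : persD B / persD A <= cA by rewrite /cA le_max lexx orbT.
have qpos : 0 < persD B / persD A by rewrite divr_gt0.
have cB0 : 0 < cB.
  rewrite /cB lt_min qpos andbT divr_gt0 //; lra.
have P2 : forall c, 0 <= c -> c <= cB -> Theta A B c = persD B.
  move=> c c0 ccB.
  have hc1 : c * persD A <= persD B.
    by have := le_trans ccB cBle; rewrite ler_pdivlMr.
  have hc2 : c * (2 * bd A) <= bm.2 + bm.1.
    have : c <= (bm.2 + bm.1) / (2 * bd A).
      by apply: le_trans ccB _; rewrite /cB ge_min lexx.
    by rewrite ler_pdivlMr //; lra.
  have lb : forall n X (f : {ffun 'I_n -> option 'I_(size B)}),
      (forall i : 'I_n, persD B <= linf (nth (0, 0) X i) bm) ->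
      persD B <= @cost_n n (size B) X B f.
    by move=> n X f H; rewrite -bm_chi; apply: lb_B => //; rewrite bm_chi.
  have ubB : \big[Num.max/0]_(j < size B | Some j \notin codom ([ffun=> None] : {ffun 'I_(size A) -> option 'I_(size B)}))
       pers_pt (nth (0, 0) B j) <= persD B.
    by apply: bigmax_le => [|j _]; [lra | exact: le_pers (nthB j)].
  apply/le_anti/andP; split.
  - case: (eqVneq c 0) => [->|cn0].
    + rewrite /Theta /scaleD eqxx bottE /bott_n; apply: bigmin_le.
      rewrite /cost_n ge_max; apply/andP; split.
      * by apply: bigmax_le => [|[]] //; lra.
      * by apply: bigmax_le => [|j _]; [lra | exact: le_pers (nthB j)].
    + rewrite ThetaE // /Thp /bott_n; apply: bigmin_le.
      rewrite /cost_n ge_max; apply/andP; split => //.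
      apply: bigmax_le; first lra.
      move=> i _; rewrite ffunE nth_sc /pers_pt /scF /=.
      have := le_pers (nthA i); rewrite /pers_pt => h.
      have := ler_wpM2l c0 h; nra.
  - case: (eqVneq c 0) => [->|cn0].
    + rewrite /Theta /scaleD eqxx bottE /bott_n.
      by apply: bigmin_ge => [|f _]; apply: lb => -[].
    + rewrite ThetaE // /Thp /bott_n.
      apply: bigmin_ge => [|f _]; apply: lb => i; rewrite nth_sc /linf /scF /=;
        have a2b := le_bd (nthA i); have [? ?] := hA _ (nthA i);
        rewrite le_max !ler_normr; apply/orP; right; apply/orP; right;
        rewrite -bm_chi /pers_pt; have := ler_wpM2l c0 a2b; nra.
have P3 : forall c, cA <= c -> Theta A B c = c * persD A.
  move=> c hc.
  have c0 : 0 < c by apply: lt_le_trans qpos (le_trans cAge hc).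
  have hc1 : persD B <= c * persD A.
    by have := le_trans cAge hc; rewrite ler_pdivrMr.
  have hc2 : 2 * bd B <= c * (am.1 + am.2).
    have : 2 * bd B / (am.1 + am.2) <= c.
      by apply: le_trans hc; rewrite /cA le_max lexx.
    by rewrite ler_pdivrMr //; lra.
  rewrite ThetaE ?gt_eqF // /Thp /bott_n; apply/le_anti/andP; split.
  - apply: bigmin_le; rewrite /cost_n ge_max; apply/andP; split.
    + apply: bigmax_le; first by nra.
      move=> i _; rewrite ffunE nth_sc /pers_pt /scF /=.
      have := le_pers (nthA i); rewrite /pers_pt => h.
      have := ler_wpM2l (ltW c0) h; nra.
    + apply: bigmax_le => [|j _]; first by nra.
      exact: le_trans (le_pers (nthB j)) hc1.
  - rewrite -am_chi; apply: bigmin_ge => [|f _]; apply: lb_A => // b bB;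
      have b2 := le_bd bB; rewrite /linf /scF /= le_max !ler_normr;
      apply/orP; right; apply/orP; left; rewrite /pers_pt; nra.
split => //; first exact: le_trans cBle cAge.
have cont : {within `[cB, cA], continuous Thp}%classic.
  by apply: continuous_subspaceT; exact: Thp_cont.
have [c0 c0I c0min] := EVT_min (le_trans cBle cAge) cont.
move: c0I; rewrite in_itv /= => /andP[c0a c0b].
have c0pos : 0 < c0 by apply: lt_le_trans cB0 c0a.
have inI : forall t, cB <= t -> t <= cA -> t \in `[cB, cA].
  by move=> t h1 h2; rewrite in_itv /= h1 h2.
exists c0; first by rewrite c0a c0b.
have Th0 : Theta A B c0 = Thp c0 by rewrite ThetaE ?gt_eqF.
have lbnd : forall c, 0 <= c -> Thp c0 <= Theta A B c.
  move=> c cc0; case: (leP c cB) => h1.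
    rewrite P2 //; have e : Theta A B cB = persD B by apply: P2 => //; exact: ltW.
    rewrite -e ThetaE ?gt_eqF //.
    by apply: c0min; apply: inI => //; exact: le_trans cBle cAge.
  case: (leP cA c) => h2.
    rewrite P3 //; apply: (@le_trans _ _ (Thp cA)).
      by apply: c0min; apply: inI => //; exact: le_trans cBle cAge.
    rewrite -ThetaE ?gt_eqF ?P3 //; last exact: lt_le_trans cB0 (le_trans cBle cAge).
    by apply: ler_wpM2r => //; exact: ltW.
  by rewrite ThetaE ?gt_eqF ?(lt_trans cB0 h1) //; apply: c0min; apply: inI; exact: ltW.
rewrite Th0 /dbarD; apply/le_anti/andP; split.
- apply: lb_le_inf; first by exists (Theta A B c0), c0 => //; exact: ltW.
  by move=> y [c /= hc <-]; exact: lbnd.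
- have hlb : has_lbound [set Theta A B c | c in [set c : R | 0 <= c]].
    by exists (Thp c0) => y [c /= hc <-]; exact: lbnd.
  have hge := ge_inf hlb; apply: hge; exists c0; [exact: ltW | exact: Th0].
Qed.

End Main.
End Helpers.

Theorem mainTheorem8 (R : realType) (A B : seq (R * R))
  (hA : is_diagram A) (hB : is_diagram B)
  (neA : A != [::]) (neB : B != [::])
  (am bm : R * R)
  (amA : am \in A) (am_chi : pers_pt am = persD A)
  (am_max : forall a, a \in A -> pers_pt a = persD A -> a.2 <= am.2)
  (bmB : bm \in B) (bm_chi : pers_pt bm = persD B)
  (bm_max : forall b, b \in B -> pers_pt b = persD B -> b.2 <= bm.2) :
  let cB := Num.min ((bm.2 + bm.1) / (2 * bd A)) (persD B / persD A) in
  let cA := Num.max ((2 * bd B) / (am.1 + am.2)) (persD B / persD A) in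
  [/\ cB <= cA,
      (forall c, 0 <= c -> c <= cB -> Theta A B c = persD B),
      (forall c, cA <= c -> Theta A B c = c * persD A) &
      exists2 c, cB <= c <= cA & Theta A B c = dbarD A B].
Proof.
exact: (@main_sec R A B hA hB neA neB am bm amA am_chi am_max bmB bm_chi bm_max).
Qed.
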